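(* Let $G$ be a two-player game (players White and Black) with a finite set $\mathcal{P}$ of positions, in which every non-terminal position has at least one White option and at least one Black option, and in which each terminal position is designated as won by White or won by Black. Let $\alpha_n$, $\beta_n$, $\alpha$, $\beta$ be defined as in the context. Then for every position $P\in\mathcal{P}$, the numbers $\alpha(P)$ and $\beta(P)$ are rational.
   Context: The game is given by a finite set $\mathcal{P}$ of positions; each position $P$ has a set of White options and a set of Black options (positions $P_w$, resp. $P_b$, to which White, resp. Black, can move from $P$). Some positions are terminal, each designated as a White win or a Black win. Define $\alpha_n,\beta_n:\mathcal{P}\to[0,1]$ for $n\ge 0$ by: for every $n$, $\alpha_n(P)=\beta_n(P)=1$ if $P$ is a terminal White win and $\alpha_n(P)=\beta_n(P)=0$ if $P$ is a terminal Black win; for non-terminal $P$, $\alpha_0(P)=0$, $\beta_0(P)=1$, and $$\alpha_{n+1}(P)=\tfrac12\Big(\max_w \alpha_n(P_w)+\min_b \alpha_n(P_b)\Big),\qquad \beta_{n+1}(P)=\tfrac12\Big(\max_w \beta_n(P_w)+\min_b \beta_n(P_b)\Big),$$ where $w$ ranges over White options and $b$ over Black options of $P$. The sequence $\alpha_n(P)$ is nondecreasing and $\beta_n(P)$ is nonincreasing; set $\alpha(P)=\lim_n\alpha_n(P)$ and $\beta(P)=\lim_n\beta_n(P)$. (In the bidding interpretation with total money $1$, $\alpha(P)$ is the threshold of Black's bankroll below which White can force a win, and $\beta(P)$ the amount Black needs to force a win; in the random-turn interpretation with a fair coin deciding who moves, they are White's optimal probabilities of winning and of not losing.) *)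

(* Defs.v *)
From HB Require Import structures.
From mathcomp Require Import all_boot all_order all_algebra.
From mathcomp Require Import all_classical all_reals all_analysis.
Set Implicit Arguments. Unset Strict Implicit. Unset Printing Implicit Defensive.
Import Order.TTheory GRing.Theory Num.Theory numFieldNormedType.Exports.
Local Open Scope ring_scope.

(* A game on a finite set of positions T:
   - term P   : P is terminal;
   - wwin P   : (for terminal P) P is a White win (otherwise a Black win);
   - wopt P Q : Q is a White option of P (White may move from P to Q);
   - bopt P Q : Q is a Black option of P. *)

(* The iteration alpha_n (init = 0) / beta_n (init = 1).
   max over White options is \big[max/0], min over Black options is
   \big[min/1]; since all values lie in [0,1] and option sets of non-terminal
   positions are nonempty, these are the genuine max / min. *)
Fixpoint game_iter (R : realType) (T : finType) (term wwin : pred T)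
    (wopt bopt : rel T) (init : R) (n : nat) (P : T) {struct n} : R :=
  if term P then (if wwin P then 1 else 0)
  else match n with
       | 0 => init
       | n'.+1 =>
           ((\big[Order.max/0]_(Q | wopt P Q)
                game_iter term wwin wopt bopt init n' Q)
            + (\big[Order.min/1]_(Q | bopt P Q)
                game_iter term wwin wopt bopt init n' Q)) / 2
       end.

Definition alpha_n (R : realType) (T : finType) (term wwin : pred T)
  (wopt bopt : rel T) (n : nat) (P : T) : R :=
  game_iter term wwin wopt bopt 0 n P.

Definition beta_n (R : realType) (T : finType) (term wwin : pred T)
  (wopt bopt : rel T) (n : nat) (P : T) : R :=
  game_iter term wwin wopt bopt 1 n P.

Definition alpha (R : realType) (T : finType) (term wwin : pred T)
  (wopt bopt : rel T) (P : T) : R :=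
  limn (fun n => @alpha_n R T term wwin wopt bopt n P).

Definition beta (R : realType) (T : finType) (term wwin : pred T)
  (wopt bopt : rel T) (P : T) : R :=
  limn (fun n => @beta_n R T term wwin wopt bopt n P).

(* Main.v *)
Require Import Defs.
From HB Require Import structures.
From mathcomp Require Import all_boot all_order all_algebra.
From mathcomp Require Import all_classical all_reals all_analysis.
From mathcomp Require Import lra ring.
Import Order.TTheory GRing.Theory Num.Theory numFieldNormedType.Exports.
Local Open Scope ring_scope.
Set Implicit Arguments. Unset Strict Implicit. Unset Printing Implicit Defensive.

Definition Fop (R : realType) (T : finType) (term wwin : pred T)
    (wopt bopt : rel T) (x : T -> R) (P : T) : R :=
  if term P then (if wwin P then 1 else 0)
  else ((\big[Order.max/0]_(Q | wopt P Q) x Q)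
            + (\big[Order.min/1]_(Q | bopt P Q) x Q)) / 2.

Lemma giterS (R : realType) (T : finType) (term wwin : pred T)
    (wopt bopt : rel T) (init : R) n P :
  game_iter term wwin wopt bopt init n.+1 P =
  Fop term wwin wopt bopt (game_iter term wwin wopt bopt init n) P.
Proof. by []. Qed.

Lemma Fop_mono (R : realType) (T : finType) (term wwin : pred T)
    (wopt bopt : rel T) (x y : T -> R) :
  (forall Q, x Q <= y Q) -> forall P,
  Fop term wwin wopt bopt x P <= Fop term wwin wopt bopt y P.
Proof.
move=> xy P; rewrite /Fop; case: (term P) => //.
rewrite ler_pM2r ?invr_gt0 ?ltr0n //; apply: lerD.
  by apply: le_bigmax2 => Q _.
by apply: le_bigmin2 => Q _.
Qed.

Lemma Fop_shift (R : realType) (T : finType) (term wwin : pred T)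
    (wopt bopt : rel T) (x : T -> R) (e : R) : 0 <= e -> forall P,
  Fop term wwin wopt bopt (fun Q => x Q + e) P <= Fop term wwin wopt bopt x P + e.
Proof.
move=> e0 P; rewrite /Fop; case: (term P); first by rewrite lerDl.
have h1 : \big[Order.max/0]_(Q | wopt P Q) (x Q + e) <=
          \big[Order.max/0]_(Q | wopt P Q) x Q + e.
  elim/big_ind2: _ => //; first by rewrite add0r.
  move=> a1 a2 b1 b2 h h'; rewrite ge_max; apply/andP; split.
    by apply: (le_trans h); rewrite lerD2r le_max lexx.
  by apply: (le_trans h'); rewrite lerD2r le_max lexx orbT.
have h2 : \big[Order.min/1]_(Q | bopt P Q) (x Q + e) <=
          \big[Order.min/1]_(Q | bopt P Q) x Q + e.
  elim/big_ind2: _ => //; first by rewrite lerDl.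
  move=> a1 a2 b1 b2 h h'; have [hab|hab] := leP a1 b1.
    by rewrite ge_min h.
  by rewrite ge_min h' orbT.
have := lerD h1 h2; lra.
Qed.

Lemma iter_bnd (R : realType) (T : finType) (term wwin : pred T)
    (wopt bopt : rel T) (init : R) : 0 <= init <= 1 -> forall n P,
  0 <= game_iter term wwin wopt bopt init n P <= 1.
Proof.
move=> /andP[i0 i1]; elim=> [|n IH] P.
  by rewrite /=; case: (term P); rewrite ?i0 ?i1 //; case: (wwin P); rewrite ?ler01 ?lexx.
rewrite giterS /Fop; case: (term P).
  by case: (wwin P); rewrite ?ler01 ?lexx.
have a1 : 0 <= \big[Order.max/0]_(Q | wopt P Q) game_iter term wwin wopt bopt init n Q <= 1.
  rewrite bigmax_ge_id /=; apply: bigmax_le; first exact: ler01.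
  by move=> Q _; case/andP: (IH Q).
have a2 : 0 <= \big[Order.min/1]_(Q | bopt P Q) game_iter term wwin wopt bopt init n Q <= 1.
  rewrite bigmin_le_id andbT; apply: le_bigmin; first exact: ler01.
  by move=> Q _; case/andP: (IH Q).
move: a1 a2 => /andP[? ?] /andP[? ?]; apply/andP; split; lra.
Qed.

Lemma seq_facts (R : realType) (u : nat -> R) :
  (forall n, u n <= u n.+1) -> (forall n, u n <= 1) ->
  (forall n, u n <= limn u) /\
  (forall e, 0 < e -> exists N, forall m, (N <= m)%N -> limn u - e < u m).
Proof.
move=> /nondecreasing_seqP hom ub.
have cu : cvgn u.
  apply/cvg_ex; exists (sup (range u)); apply: nondecreasing_cvgn => //.
  by exists 1 => _ [n _ <-].
split; first exact: nondecreasing_cvgn_le.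
move=> e e0; have := (cvgrPdist_lt _ _).1 cu e e0.
move=> [N _ HN]; exists N => m Nm.
have := HN m Nm; rewrite /= => h.
have : `|limn u - u m| < e by [].
rewrite ltr_norml => /andP[_]; lra.
Qed.

Lemma lim_le (R : realType) (u : nat -> R) (c : R) :
  (forall n, u n <= u n.+1) -> (forall n, u n <= 1) ->
  (forall n, u n <= c) -> limn u <= c.
Proof.
move=> h1 h2 h3; have [_ H] := seq_facts h1 h2.
apply/ler_addgt0Pr => e e0; have [N HN] := H e e0.
have := HN N (leqnn N); have := h3 N; lra.
Qed.

Lemma alpha_le1 (R : realType) (T : finType) (term wwin : pred T)
    (wopt bopt : rel T) n P :
  0 <= @alpha_n R T term wwin wopt bopt n P <= 1.
Proof. by apply: iter_bnd; rewrite lexx ler01. Qed.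
Arguments alpha_le1 {R T}.


Lemma alpha_step (R : realType) (T : finType) (term wwin : pred T)
    (wopt bopt : rel T) n P :
  @alpha_n R T term wwin wopt bopt n P <= @alpha_n R T term wwin wopt bopt n.+1 P.
Proof.
rewrite /alpha_n; elim: n P => [|n IH] P.
  case tP: (term P); first by rewrite /= tP.
  rewrite [X in X <= _]/= tP; by case/andP: (alpha_le1 (R:=R) term wwin wopt bopt 1 P).
rewrite giterS [game_iter _ _ _ _ _ n.+2 _]giterS; exact: Fop_mono.
Qed.
Arguments alpha_step {R T}.


Lemma alpha_ge (R : realType) (T : finType) (term wwin : pred T)
    (wopt bopt : rel T) n P :
  @alpha_n R T term wwin wopt bopt n P <= @alpha R T term wwin wopt bopt P.
Proof.
have [h _] := seq_facts (fun n => alpha_step (R:=R) term wwin wopt bopt n P)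
   (fun n => proj2 (andP (alpha_le1 (R:=R) term wwin wopt bopt n P))).
exact: h.
Qed.
Arguments alpha_ge {R T}.


Lemma alpha_lim_le (R : realType) (T : finType) (term wwin : pred T)
    (wopt bopt : rel T) P (c : R) :
  (forall n, @alpha_n R T term wwin wopt bopt n P <= c) ->
  @alpha R T term wwin wopt bopt P <= c.
Proof.
apply: lim_le; first by move=> n; apply: alpha_step.
by move=> n; case/andP: (alpha_le1 (R:=R) term wwin wopt bopt n P).
Qed.
Arguments alpha_lim_le {R T}.


Lemma alpha_approx (R : realType) (T : finType) (term wwin : pred T)
    (wopt bopt : rel T) (e : R) : 0 < e ->
  exists N, forall Q, @alpha R T term wwin wopt bopt Q <= @alpha_n R T term wwin wopt bopt N Q + e.
Proof.
move=> e0.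
have H : forall Q, exists N, forall m, (N <= m)%N ->
    @alpha R T term wwin wopt bopt Q - e < @alpha_n R T term wwin wopt bopt m Q.
  move=> Q; have [_ h] := seq_facts (fun n => alpha_step (R:=R) term wwin wopt bopt n Q)
   (fun n => proj2 (andP (alpha_le1 (R:=R) term wwin wopt bopt n Q))).
  exact: h.
pose N Q := proj1_sig (cid (H Q)).
exists (\max_Q N Q)%N => Q.
have := proj2_sig (cid (H Q)) (\max_Q N Q)%N (leq_bigmax Q).
lra.
Qed.

Lemma alpha_fix (R : realType) (T : finType) (term wwin : pred T)
    (wopt bopt : rel T) P :
  Fop term wwin wopt bopt (@alpha R T term wwin wopt bopt) P = @alpha R T term wwin wopt bopt P.
Proof.
apply/eqP; rewrite eq_le; apply/andP; split.
  apply/ler_addgt0Pr => e e0; have [N HN] := alpha_approx term wwin wopt bopt e0.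
  apply: (le_trans (Fop_mono (y := fun Q => @alpha_n R T term wwin wopt bopt N Q + e) _ _ _ _ HN P)).
  apply: (le_trans (Fop_shift _ _ _ _ _ (ltW e0) P)).
  rewrite lerD2r; have := alpha_ge (R:=R) term wwin wopt bopt N.+1 P; by [].
apply: alpha_lim_le => n.
apply: (le_trans (alpha_step (R:=R) term wwin wopt bopt n P)).
rewrite /alpha_n giterS; apply: Fop_mono => Q; exact: alpha_ge.
Qed.
Arguments alpha_fix {R T}.

Lemma sum_reidx (R : realType) (T : finType) (F : T -> R) :
  \sum_(i < #|T|) F (enum_val i) = \sum_P F P.
Proof.
rewrite [RHS](reindex (@enum_val T predT)) //; apply: onW_bij; exact: enum_val_bij.
Qed.

Lemma rat_sol (R : realType) (T C : finType) (coef : C -> T -> rat)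
    (rhs : C -> rat) (a : T -> R) :
  (forall c, \sum_P ratr (coef c P) * a P = ratr (rhs c)) ->
  (forall d : T -> R, (forall c, \sum_P ratr (coef c P) * d P = 0) ->
      forall P, d P = 0) ->
  forall P, exists q : rat, a P = ratr q.
Proof.
move=> ha hd.
pose A : 'M[rat]_(#|T|, #|C|) := \matrix_(i, j) coef (enum_val j) (enum_val i).
pose cv : 'rV[rat]_#|C| := \row_j rhs (enum_val j).
pose av : 'rV[R]_#|T| := \row_i a (enum_val i).
pose f : {rmorphism rat -> R} := ratr.
have key : forall (x : 'rV[R]_#|T|) j, (x *m map_mx f A) 0 j =
    \sum_P ratr (coef (enum_val j) P) * x 0 (enum_rank P).
  move=> x j; rewrite mxE -(@sum_reidx R T (fun P => ratr (coef (enum_val j) P) * x 0 (enum_rank P))); apply: eq_bigr => i _.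
  by rewrite !mxE enum_valK mulrC.
have hav : av *m map_mx f A = map_mx f cv.
  apply/rowP => j; rewrite key !mxE; apply: (eq_trans _ (ha _)); apply: eq_bigr => P _.
  by rewrite mxE enum_rankK.
have : (cv <= A)%MS.
  by rewrite -(map_submx f) -hav submxMl.
case/submxP => q hq.
pose d P := (map_mx f q) 0 (enum_rank P) - a P.
have h0 : forall c, \sum_P ratr (coef c P) * d P = 0.
  move=> c; rewrite -(enum_rankK c).
  have := key (map_mx f q - av) (enum_rank c).
  rewrite mulmxBl -map_mxM -hq hav subrr mxE => h; rewrite [RHS]h.
  apply: eq_bigr => P _; by rewrite !mxE !enum_rankK /d !mxE.
move=> P; exists (q 0 (enum_rank P)).
have := hd d h0 P; rewrite /d mxE => /eqP; rewrite subr_eq0 => /eqP ->.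
by [].
Qed.

Lemma bmax_at (R : realType) (I : finType) (p : pred I) (F : I -> R) (x0 : R) j :
  p j -> x0 <= F j -> (forall i, p i -> F i <= F j) ->
  \big[Order.max/x0]_(i | p i) F i = F j.
Proof.
move=> pj h1 h2; apply: le_anti; apply/andP; split.
  exact: bigmax_le.
exact: le_bigmax_cond.
Qed.

Lemma bmin_at (R : realType) (I : finType) (p : pred I) (F : I -> R) (x0 : R) j :
  p j -> F j <= x0 -> (forall i, p i -> F j <= F i) ->
  \big[Order.min/x0]_(i | p i) F i = F j.
Proof.
move=> pj h1 h2; apply: le_anti; apply/andP; split.
  exact: bigmin_le_cond.
exact: le_bigmin.
Qed.


Lemma pert (R : realType) (T : finType) (term wwin : pred T)
    (wopt bopt : rel T) (w b : T -> T) (d : T -> R) :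
  let a := @alpha R T term wwin wopt bopt in
  (forall P, 0 <= a P <= 1) ->
  (forall P, term P -> a P = if wwin P then 1 else 0) ->
  (forall P, ~~ term P -> wopt P (w P) /\ forall Q, wopt P Q -> a Q <= a (w P)) ->
  (forall P, ~~ term P -> bopt P (b P) /\ forall Q, bopt P Q -> a (b P) <= a Q) ->
  (forall P, ~~ term P -> a P = (a (w P) + a (b P)) / 2) ->
  (forall P Q, a P = a Q -> d P = d Q) ->
  (forall P, a P = 0 \/ a P = 1 -> d P = 0) ->
  (forall P, ~~ term P -> d P = (d (w P) + d (b P)) / 2) ->
  forall P, 0 <= d P.
Proof.
move=> a a01 aterm hw hb afix H1 H2 H3.
pose a' (i : T + bool) : R := match i with inl P => a P | inr bb => if bb then 1 else 0 end.
pose d' (i : T + bool) : R := match i with inl P => d P | inr bb => 0 end.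
have Eq : forall i j, a' i = a' j -> d' i = d' j.
  have H2' : forall P bb, a P = (if bb then 1 else 0) -> d P = 0.
    by move=> P [] h; apply: H2; [right|left].
  case=> [P|bb] [Q|bb'] //= h.
  - exact: H1.
  - exact: (H2' P bb').
  - by rewrite (H2' Q bb).
pose M : R := 1 + \sum_i `|d' i|.
have hM : forall i, `|d' i| < M.
  move=> i; rewrite /M (bigD1 i) //=.
  have : 0 <= \sum_(j | j != i) `|d' j| by apply: sumr_ge0.
  lra.
have M0 : 0 < M by apply: le_lt_trans (hM (inr true)); rewrite normr_ge0.
pose delta : R := \big[Order.min/1]_(ij : (T + bool) * (T + bool) | a' ij.1 < a' ij.2)
   (a' ij.2 - a' ij.1).
have delta0 : 0 < delta.
  apply/bigmin_gtP; split; first exact: ltr01.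
  by move=> ij h; rewrite subr_gt0.
have hdelta : forall i j, a' i < a' j -> delta <= a' j - a' i.
  move=> i j h; rewrite /delta.
  exact: (@bigmin_le_cond _ _ _ 1 (i, j) (fun ij : (T + bool) * (T + bool) => a' ij.1 < a' ij.2)
     (fun ij => a' ij.2 - a' ij.1) h).
pose eps : R := delta / (2 * M).
have eps0 : 0 < eps by rewrite divr_gt0 // mulr_gt0.
have heps : forall i, - (delta / 2) < eps * d' i < delta / 2.
  move=> i; rewrite -ltr_norml normrM (gtr0_norm eps0).
  have : eps * `|d' i| < eps * M by rewrite ltr_pM2l.
  suff -> : eps * M = delta / 2 by [].
  rewrite /eps; field; rewrite lt0r_neq0 //.
pose x' i := a' i + eps * d' i.
have mono : forall i j, a' i <= a' j -> x' i <= x' j.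
  move=> i j; rewrite le_eqVlt => /orP[/eqP h|h].
    by rewrite /x' h (Eq _ _ h).
  have := hdelta _ _ h; have := heps i; have := heps j; rewrite /x'.
  move=> /andP[h1 h2] /andP[h3 h4] h5; lra.
pose x P := a P + eps * d P.
have xa : forall P Q, a P <= a Q -> x P <= x Q.
  by move=> P Q h; exact: (mono (inl P) (inl Q) h).
have x0 : forall P, 0 <= x P.
  move=> P; have := mono (inr false) (inl P); rewrite /x' /= mulr0 addr0.
  by move=> h; apply: h; case/andP: (a01 P).
have x1 : forall P, x P <= 1.
  move=> P; have := mono (inl P) (inr true); rewrite /x' /= mulr0 addr0.
  by move=> h; apply: h; case/andP: (a01 P).
have dterm : forall P, term P -> d P = 0.
  move=> P tP; apply: H2; rewrite (aterm P tP); case: (wwin P); [right|left] => //.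
have xfix : forall P, Fop term wwin wopt bopt x P = x P.
  move=> P; rewrite /Fop; case tP: (term P).
    by rewrite /x (dterm P tP) mulr0 addr0 (aterm P tP).
  have ntP : ~~ term P by rewrite tP.
  have [hw1 hw2] := hw P ntP; have [hb1 hb2] := hb P ntP.
  rewrite (bmax_at hw1 (x0 _) (fun Q hQ => xa _ _ (hw2 Q hQ))).
  rewrite (bmin_at hb1 (x1 _) (fun Q hQ => xa _ _ (hb2 Q hQ))).
  by rewrite /x (afix P ntP) (H3 P ntP); field.
have le_x : forall n P, @alpha_n R T term wwin wopt bopt n P <= x P.
  elim=> [|n IH] P.
    rewrite /alpha_n /=; case tP: (term P); last exact: x0.
    by rewrite -(xfix P) /Fop tP.
  rewrite /alpha_n giterS -(xfix P); exact: Fop_mono.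
move=> P; have := alpha_lim_le term wwin wopt bopt P _ (le_x^~ P).
rewrite -/(a P) /x lerDl => h.
by rewrite -(pmulr_rge0 _ eps0).
Qed.

Lemma sum_delta (R : realType) (T : finType) (P : T) (y : T -> R) :
  \sum_Q ratr ((Q == P)%:R : rat) * y Q = y P.
Proof.
rewrite (bigD1 P) //= eqxx rmorph_nat mul1r big1 ?addr0 // => Q /negbTE ->.
by rewrite rmorph0 mul0r.
Qed.

Lemma sum_lin (R : realType) (T : finType) (f g : T -> rat) (y : T -> R) :
  \sum_Q ratr (f Q - g Q) * y Q =
  \sum_Q ratr (f Q) * y Q - \sum_Q ratr (g Q) * y Q.
Proof.
rewrite -sumrB; apply: eq_bigr => Q _; by rewrite rmorphB mulrBl.
Qed.

Lemma sum_delta2 (R : realType) (T : finType) (P : T) (y : T -> R) :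
  \sum_Q ratr ((Q == P)%:R *+ 2 : rat) * y Q = y P *+ 2.
Proof.
rewrite -sum_delta -sumrMnl; apply: eq_bigr => Q _; by rewrite rmorphMn mulrnAl.
Qed.

Lemma sum_zero (R : realType) (T : finType) (y : T -> R) :
  \sum_Q ratr (0 : rat) * y Q = 0.
Proof. by rewrite big1 // => Q _; rewrite rmorph0 mul0r. Qed.

Lemma alpha_rat (R : realType) (T : finType) (term wwin : pred T)
    (wopt bopt : rel T)
    (hW : forall P : T, ~~ term P -> exists Q : T, wopt P Q)
    (hB : forall P : T, ~~ term P -> exists Q : T, bopt P Q) :
  forall P : T, exists q : rat, @alpha R T term wwin wopt bopt P = ratr q.
Proof.
pose a := @alpha R T term wwin wopt bopt.
have a01 : forall P, 0 <= a P <= 1.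
  move=> P; apply/andP; split.
    apply: le_trans (alpha_ge term wwin wopt bopt 0 P).
    by case/andP: (alpha_le1 (R:=R) term wwin wopt bopt 0 P).
  apply: alpha_lim_le => n; by case/andP: (alpha_le1 (R:=R) term wwin wopt bopt n P).
have aterm : forall P, term P -> a P = if wwin P then 1 else 0.
  by move=> P tP; rewrite /a -(alpha_fix term wwin wopt bopt P) /Fop tP.
have hw' : forall P, exists w, ~~ term P -> wopt P w /\ (forall Q, wopt P Q -> a Q <= a w).
  move=> P; case tP: (term P); first by exists P.
  have [Q0 hQ0] := hW P (negbT tP).
  case: (@arg_maxP _ _ _ Q0 (wopt P) a hQ0) => wv hw hmax.
  by exists wv => _; split => // Q hQ; exact: hmax.
have hb' : forall P, exists b, ~~ term P -> bopt P b /\ (forall Q, bopt P Q -> a b <= a Q).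
  move=> P; case tP: (term P); first by exists P.
  have [Q0 hQ0] := hB P (negbT tP).
  case: (@arg_minP _ _ _ Q0 (bopt P) a hQ0) => bv hb hmin.
  by exists bv => _; split => // Q hQ; exact: hmin.
pose w P := proj1_sig (cid (hw' P)).
have hw : forall P, ~~ term P -> wopt P (w P) /\ (forall Q, wopt P Q -> a Q <= a (w P)).
  move=> P; exact: (proj2_sig (cid (hw' P))).
pose b P := proj1_sig (cid (hb' P)).
have hb : forall P, ~~ term P -> bopt P (b P) /\ (forall Q, bopt P Q -> a (b P) <= a Q).
  move=> P; exact: (proj2_sig (cid (hb' P))).
have afix : forall P, ~~ term P -> a P = (a (w P) + a (b P)) / 2.
  move=> P ntP; rewrite /a -{1}(alpha_fix term wwin wopt bopt P) /Fop (negbTE ntP).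
  have [hw1 hw2] := hw P ntP; have [hb1 hb2] := hb P ntP.
  rewrite (bmax_at hw1 _ hw2); last by case/andP: (a01 (w P)).
  rewrite (bmin_at hb1 _ hb2) //; by case/andP: (a01 (b P)).
pose coef (c : ((T * T) + T) + T) (R0 : T) : rat :=
  match c with
  | inl (inl (P, Q)) => if a P == a Q then (R0 == P)%:R - (R0 == Q)%:R else 0
  | inl (inr P) => if term P then 0 else (R0 == P)%:R *+ 2 - (R0 == w P)%:R - (R0 == b P)%:R
  | inr P => if (a P == 0) || (a P == 1) then (R0 == P)%:R else 0
  end.
pose rhs (c : ((T * T) + T) + T) : rat :=
  match c with inr P => if a P == 1 then 1 else 0 | _ => 0 end.
have sumE : forall (y : T -> R) c, \sum_R0 ratr (coef c R0) * y R0 =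
  match c with
  | inl (inl (P, Q)) => if a P == a Q then y P - y Q else 0
  | inl (inr P) => if term P then 0 else y P *+ 2 - y (w P) - y (b P)
  | inr P => if (a P == 0) || (a P == 1) then y P else 0
  end.
  move=> y [[[P Q]|P]|P] /=.
  - case: ifP => _; last exact: sum_zero.
    by rewrite (sum_lin (fun R0 => (R0 == P)%:R)) !sum_delta.
  - case: ifP => _; first exact: sum_zero.
    rewrite (sum_lin (fun R0 => (R0 == P)%:R *+ 2 - (R0 == w P)%:R)).
    by rewrite (sum_lin (fun R0 => (R0 == P)%:R *+ 2)) sum_delta2 !sum_delta.
  - case: ifP => _; last exact: sum_zero.
    exact: sum_delta.
apply: (@rat_sol R T _ coef rhs a).
  move=> c; rewrite sumE; case: c => [[[P Q]|P]|P] /=.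
  - by case: eqP => [->|_]; rewrite ?subrr rmorph0.
  - case tP: (term P); first by rewrite rmorph0.
    rewrite rmorph0 (afix P (negbT tP)) mulr2n; lra.
  - case: eqP => [->|_] /=; first by rewrite eq_sym oner_eq0 /= rmorph0.
    by case: eqP => [->|_] /=; rewrite ?rmorph1 ?rmorph0.
move=> d hd.
have hd' : forall c, match c with
  | inl (inl (P, Q)) => if a P == a Q then d P - d Q else 0
  | inl (inr P) => if term P then 0 else d P *+ 2 - d (w P) - d (b P)
  | inr P => if (a P == 0) || (a P == 1) then d P else 0
  end = 0 by move=> c; rewrite -sumE hd.
have H1 : forall (s : R) P Q, a P = a Q -> s * d P = s * d Q.
  move=> s P Q h; have := hd' (inl (inl (P, Q))); rewrite /= h eqxx => /eqP.
  by rewrite subr_eq0 => /eqP ->.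
have H2 : forall (s : R) P, a P = 0 \/ a P = 1 -> s * d P = 0.
  move=> s P h; have := hd' (inr P); rewrite /=.
  by case: h => ->; rewrite ?eqxx ?orbT /= => ->; rewrite mulr0.
have H3 : forall (s : R) P, ~~ term P -> s * d P = (s * d (w P) + s * d (b P)) / 2.
  move=> s P ntP; have := hd' (inl (inr P)); rewrite /= (negbTE ntP) mulr2n => h.
  have -> : d P = (d (w P) + d (b P)) / 2 by lra.
  by field.
have p1 := @pert R T term wwin wopt bopt w b (fun P => 1 * d P) a01 aterm hw hb afix (H1 1) (H2 1) (H3 1).
have p2 := @pert R T term wwin wopt bopt w b (fun P => -1 * d P) a01 aterm hw hb afix (H1 (-1)) (H2 (-1)) (H3 (-1)).
move=> P; apply/eqP; rewrite eq_le; apply/andP; split.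
  by have := p2 P; lra.
by have := p1 P; lra.
Qed.

Lemma alpha_cvg (R : realType) (T : finType) (term wwin : pred T)
    (wopt bopt : rel T) P :
  ((fun n => @alpha_n R T term wwin wopt bopt n P) @ \oo -->
     @alpha R T term wwin wopt bopt P)%classic.
Proof.
have cu : cvgn (fun n => @alpha_n R T term wwin wopt bopt n P).
  apply/cvg_ex; exists (sup (range (fun n => @alpha_n R T term wwin wopt bopt n P))).
  apply: nondecreasing_cvgn.
    apply/nondecreasing_seqP => n; exact: alpha_step.
  by exists 1 => _ [n _ <-]; case/andP: (alpha_le1 (R:=R) term wwin wopt bopt n P).
exact: cu.
Qed.

Lemma oneB_min (R : realType) (x y : R) : 1 - Order.min x y = Order.max (1 - x) (1 - y).
Proof. by case: (leP x y) => h; case: (leP (1 - x) (1 - y)) => h'; lra. Qed.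

Lemma oneB_max (R : realType) (x y : R) : 1 - Order.max x y = Order.min (1 - x) (1 - y).
Proof. by case: (leP x y) => h; case: (leP (1 - x) (1 - y)) => h'; lra. Qed.

Lemma beta_dual (R : realType) (T : finType) (term wwin : pred T)
    (wopt bopt : rel T) n P :
  @beta_n R T term wwin wopt bopt n P =
  1 - @alpha_n R T term (fun Q => ~~ wwin Q) bopt wopt n P.
Proof.
rewrite /beta_n /alpha_n; elim: n P => [|n IH] P.
  by rewrite /=; case: (term P); [case: (wwin P) => /=|]; rewrite ?subr0 ?subrr.
rewrite !giterS /Fop; case: (term P); first by case: (wwin P) => /=; rewrite ?subr0 ?subrr.
under eq_bigr => Q _ do rewrite IH.
under [X in _ + X]eq_bigr => Q _ do rewrite IH.
rewrite -(big_morph (fun x : R => 1 - x) (@oneB_min R) (subrr 1)).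
rewrite -(big_morph (fun x : R => 1 - x) (@oneB_max R) (subr0 1)).
lra.
Qed.

Lemma beta_rat (R : realType) (T : finType) (term wwin : pred T)
    (wopt bopt : rel T)
    (hW : forall P : T, ~~ term P -> exists Q : T, wopt P Q)
    (hB : forall P : T, ~~ term P -> exists Q : T, bopt P Q) :
  forall P : T, exists q : rat, @beta R T term wwin wopt bopt P = ratr q.
Proof.
move=> P; have [q hq] := alpha_rat R (fun Q => ~~ wwin Q) hB hW P.
exists (1 - q); have -> : ratr (1 - q) = 1 - ratr q :> R by rewrite rmorphB rmorph1.
rewrite -hq.
rewrite /beta; apply: cvg_lim => //.
have -> : (fun n => @beta_n R T term wwin wopt bopt n P) =
   (fun n => 1 - @alpha_n R T term (fun Q => ~~ wwin Q) bopt wopt n P).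
  by apply: funext => n; rewrite beta_dual.
apply: cvgB; first exact: cvg_cst.
exact: alpha_cvg.
Qed.


Unset Implicit Arguments.
Set Strict Implicit.
Theorem proposition1 (R : realType) (T : finType) (term wwin : pred T)
    (wopt bopt : rel T)
    (hW : forall P : T, ~~ term P -> exists Q : T, wopt P Q)
    (hB : forall P : T, ~~ term P -> exists Q : T, bopt P Q) :
  forall P : T,
    (exists q : rat, @alpha R T term wwin wopt bopt P = ratr q) /\
    (exists q : rat, @beta R T term wwin wopt bopt P = ratr q).
Proof.
move=> P; split; [exact: alpha_rat | exact: beta_rat].
Qed.
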